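(* Let $M$ be a term of $\ell\Lambda_\infty^{4S}$ and $n\in\mathbb{N}$. If $M\to_n N$ (a reduction step at depth $n$), then $\mathcal{W}_n(M)>\mathcal{W}_n(N)$, and $\mathcal{W}_m(M)=\mathcal{W}_m(N)$ for every $m<n$.
   Context: Preterms: possibly infinite trees generated by $M ::= x \mid MN \mid \lambda x.M \mid \lambda^{\downarrow}x.M \mid \lambda^{\uparrow}x.M \mid \downarrow M \mid \uparrow M$ ($\downarrow M$ inductive box, $\uparrow M$ coinductive box). Patterns: $x,\downarrow x,\uparrow x,\#x,\dagger x$; environments: finite sets of patterns, each variable in at most one; $\Theta,\Xi,\Psi,\Phi$ linear environments (sets of variables) with marked versions $\#\Theta$ etc.; $\Upsilon,\Pi$ environments with only patterns $y$, $\downarrow y$; commas are disjoint unions. A term of $\ell\Lambda_\infty^{4S}$ is a preterm $M$ with $\Gamma\vdash M$ derivable for some $\Gamma$ by: (vl) $\#\Theta,\uparrow\Xi,\dagger\Psi,x\vdash x$; (vd) $\#\Theta,\uparrow\Xi,\dagger\Psi,\#x\vdash x$; (va) $\#\Theta,\uparrow\Xi,\dagger\Psi,\dagger x\vdash x$; (a) from $\Upsilon,\#\Theta,\uparrow\Xi,\dagger\Psi\vdash M$ and $\Pi,\#\Theta,\uparrow\Xi,\dagger\Psi\vdash N$ infer $\Upsilon,\Pi,\#\Theta,\uparrow\Xi,\dagger\Psi\vdash MN$; (ll) $\Gamma,x\vdash M$ gives $\Gamma\vdash\lambda x.M$; (li)$_1$ $\Gamma,\#x\vdash M$ gives $\Gamma\vdash\lambda^\downarrow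 x.M$; (li)$_2$ $\Gamma,\downarrow x\vdash M$ gives $\Gamma\vdash\lambda^\downarrow x.M$; (lc) $\Gamma,\uparrow x\vdash M$ gives $\Gamma\vdash\lambda^\uparrow x.M$; (mi) from $\Xi,\uparrow\Psi,\dagger\Phi\vdash M$ infer $\#\Theta,\downarrow\Xi,\uparrow\Psi,\dagger\Phi\vdash\downarrow M$; (mc) from $\dagger\Xi,\dagger\Psi\vdash M$ infer $\#\Theta,\uparrow\Xi,\dagger\Psi\vdash\uparrow M$; (mc) coinductive, others inductive (every infinite branch of a derivation contains infinitely many (mc)). Basic reduction: $(\lambda x.M)N\mapsto M[N/x]$, $(\lambda^\downarrow x.M)(\downarrow N)\mapsto M[N/x]$, $(\lambda^\uparrow x.M)(\uparrow N)\mapsto M[N/x]$; $M\to_n N$ iff $M=C[L]$, $N=C[P]$, $L\mapsto P$, where $C$ is a one-hole context whose hole lies inside exactly $n$ coinductive boxes $\uparrow(\cdot)$ (and any number of inductive boxes). $\mathrm{nfo}(x,M)$ = number of free occurrences of $x$ in $M$. For a term $M$ and $k,m\in\mathbb N$, the weight $W^k_m(M)$ is the unique natural number with: $W^k_0(x)=1$, $W^k_0(\downarrow M)=k\cdot W^k_0(M)$, $W^k_0(\uparrow M)=0$, $W^k_0(MN)=W^k_0(M)+W^k_0(N)$, $W^k_0(\lambda x.M)=W^k_0(\lambda^\downarrow x.M)=W^k_0(\lambda^\uparrow x.M)=W^k_0(M)+1$; $W^k_{m+1}(x)=0$, $W^k_{m+1}(\downarrow M)=W^k_{m+1}(M)$,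 $W^k_{m+1}(\uparrow M)=W^k_m(M)$, $W^k_{m+1}(MN)=W^k_{m+1}(M)+W^k_{m+1}(N)$, $W^k_{m+1}$ of any abstraction of $M$ equals $W^k_{m+1}(M)$. The duplicability factor $D_m(M)$ is the unique natural number with: $D_0(x)=1$, $D_0(\downarrow M)=D_0(M)$, $D_0(\uparrow M)=1$, $D_0(MN)=\max\{D_0(M),D_0(N)\}$, $D_0(\lambda x.M)=D_0(\lambda^\uparrow x.M)=D_0(M)$, $D_0(\lambda^\downarrow x.M)=\max\{\mathrm{nfo}(x,M),D_0(M)\}$; $D_{m+1}(x)=1$, $D_{m+1}(\downarrow M)=D_{m+1}(M)$, $D_{m+1}(\uparrow M)=D_m(M)$, $D_{m+1}(MN)=\max\{D_{m+1}(M),D_{m+1}(N)\}$, $D_{m+1}$ of any abstraction of $M$ equals $D_{m+1}(M)$. Finally $\mathcal{W}_n(M)=W^{D_n(M)}_n(M)$. *)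

(* Defs.v *)
(* Infinitary linear lambda calculus l-Lambda_infty^{4S},
   presented with de Bruijn indices (index 0 = innermost binder). *)
From Stdlib Require Import Arith List.
Import ListNotations.

CoInductive term : Type :=
| Var  : nat -> term
| App  : term -> term -> term
| Lam  : term -> term
| LamI : term -> term
| LamC : term -> term
| BoxI : term -> term      (* inductive box  (down M) *)
| BoxC : term -> term.     (* coinductive box (up M)  *)

CoInductive bisim : term -> term -> Prop :=
| bs_var  : forall x, bisim (Var x) (Var x)
| bs_app  : forall a b a' b', bisim a a' -> bisim b b' -> bisim (App a b) (App a' b')
| bs_lam  : forall a a', bisim a a' -> bisim (Lam a) (Lam a')
| bs_lamI : forall a a', bisim a a' -> bisim (LamI a) (LamI a')
| bs_lamC : forall a a', bisim a a' -> bisim (LamC a) (LamC a')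
| bs_boxI : forall a a', bisim a a' -> bisim (BoxI a) (BoxI a')
| bs_boxC : forall a a', bisim a a' -> bisim (BoxC a) (BoxC a').

Definition uprn (r : nat -> nat) : nat -> nat :=
  fun i => match i with 0 => 0 | S j => S (r j) end.

CoFixpoint ren (r : nat -> nat) (M : term) : term :=
  match M with
  | Var x => Var (r x)
  | App a b => App (ren r a) (ren r b)
  | Lam a => Lam (ren (uprn r) a)
  | LamI a => LamI (ren (uprn r) a)
  | LamC a => LamC (ren (uprn r) a)
  | BoxI a => BoxI (ren r a)
  | BoxC a => BoxC (ren r a)
  end.

Definition up (s : nat -> term) : nat -> term :=
  fun i => match i with 0 => Var 0 | S j => ren S (s j) end.

CoFixpoint subst (s : nat -> term) (M : term) : term :=
  match M with
  | Var x => s x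
  | App a b => App (subst s a) (subst s b)
  | Lam a => Lam (subst (up s) a)
  | LamI a => LamI (subst (up s) a)
  | LamC a => LamC (subst (up s) a)
  | BoxI a => BoxI (subst s a)
  | BoxC a => BoxC (subst s a)
  end.

(* M[N/x] where x is the variable bound by the enclosing abstraction *)
Definition subst0 (N M : term) : term :=
  subst (fun i => match i with 0 => N | S j => Var j end) M.

(* kinds of patterns: x, down x, up x, #x, dagger x *)
Inductive kind : Type := KLin | KDown | KUp | KHash | KDag.

(* An environment maps each variable (de Bruijn index) to at most one
   pattern; finiteness is imposed where environments are introduced. *)
Definition env := nat -> option kind.

Definition env_finite (G : env) : Prop :=
  exists b, forall i, b <= i -> G i = None.

Definition ext (k : kind) (G : env) : env :=
  fun i => match i with 0 => Some k | S j => G j end.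

(* entry belongs to  #Theta, up Xi, dagger Psi  (or is absent) *)
Definition shared_or_none (o : option kind) : Prop :=
  match o with
  | None | Some KHash | Some KUp | Some KDag => True
  | _ => False
  end.

(* G = #Theta, up Xi, dagger Psi, (pattern k on x) *)
Definition var_env (k : kind) (G : env) (x : nat) : Prop :=
  G x = Some k /\ forall y, y <> x -> shared_or_none (G y).

(* G = Upsilon, Pi, #Theta, up Xi, dagger Psi  with
   G1 = Upsilon, #Theta, up Xi, dagger Psi  and  G2 = Pi, #Theta, up Xi, dagger Psi *)
Definition app_split (G G1 G2 : env) : Prop :=
  forall i,
    match G i with
    | Some KLin | Some KDown =>
        (G1 i = G i /\ G2 i = None) \/ (G1 i = None /\ G2 i = G i)
    | _ => G1 i = G i /\ G2 i = G i
    end.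

(* rule (mi):  Xi, up Psi, dagger Phi |- M   ==>   #Theta, down Xi, up Psi, dagger Phi |- down M *)
Definition mi_env (G G' : env) : Prop :=
  forall i,
    match G i with
    | None => G' i = None
    | Some KHash => G' i = None
    | Some KDown => G' i = Some KLin
    | Some KUp => G' i = Some KUp
    | Some KDag => G' i = Some KDag
    | Some KLin => False
    end.

(* rule (mc):  dagger Xi, dagger Psi |- M   ==>   #Theta, up Xi, dagger Psi |- up M *)
Definition mc_env (G G' : env) : Prop :=
  forall i,
    match G i with
    | None => G' i = None
    | Some KHash => G' i = None
    | Some KUp => G' i = Some KDag
    | Some KDag => G' i = Some KDag
    | Some KLin | Some KDown => False
    end.

(* One layer of the derivation system: all rules are inductive except (mc),
   whose premise is taken from the (coinductive) relation R. *)
Inductive derI (R : env -> term -> Prop) : env -> term -> Prop :=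
| d_vl : forall G x, var_env KLin G x -> derI R G (Var x)
| d_vd : forall G x, var_env KHash G x -> derI R G (Var x)
| d_va : forall G x, var_env KDag G x -> derI R G (Var x)
| d_a  : forall G G1 G2 M N, app_split G G1 G2 ->
           derI R G1 M -> derI R G2 N -> derI R G (App M N)
| d_ll : forall G M, derI R (ext KLin G) M -> derI R G (Lam M)
| d_li1 : forall G M, derI R (ext KHash G) M -> derI R G (LamI M)
| d_li2 : forall G M, derI R (ext KDown G) M -> derI R G (LamI M)
| d_lc : forall G M, derI R (ext KUp G) M -> derI R G (LamC M)
| d_mi : forall G G' M, mi_env G G' -> derI R G' M -> derI R G (BoxI M)
| d_mc : forall G G' M, mc_env G G' -> R G' M -> derI R G (BoxC M).

(* Derivability: greatest fixed point of (least fixed point of derI), i.e.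
   possibly infinite derivations in which every infinite branch crosses
   infinitely many (mc) rules. *)
Definition der (G : env) (M : term) : Prop :=
  exists R : env -> term -> Prop,
    R G M /\ forall G' M', R G' M' -> derI R G' M'.

Definition is_term (M : term) : Prop :=
  exists G, env_finite G /\ der G M.

Inductive step0 : nat -> term -> term -> Prop :=
| st_beta  : forall M N, step0 0 (App (Lam M) N) (subst0 N M)
| st_betaI : forall M N, step0 0 (App (LamI M) (BoxI N)) (subst0 N M)
| st_betaC : forall M N, step0 0 (App (LamC M) (BoxC N)) (subst0 N M)
| st_appl : forall n M M' N, step0 n M M' -> step0 n (App M N) (App M' N)
| st_appr : forall n M N N', step0 n N N' -> step0 n (App M N) (App M N')
| st_lam  : forall n M M', step0 n M M' -> step0 n (Lam M) (Lam M')
| st_lamI : forall n M M', step0 n M M' -> step0 n (LamI M) (LamI M')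
| st_lamC : forall n M M', step0 n M M' -> step0 n (LamC M) (LamC M')
| st_boxI : forall n M M', step0 n M M' -> step0 n (BoxI M) (BoxI M')
| st_boxC : forall n M M', step0 n M M' -> step0 (S n) (BoxC M) (BoxC M').

Definition step (n : nat) (M N : term) : Prop :=
  exists N', step0 n M N' /\ bisim N' N.

Inductive dir : Type := dAppL | dAppR | dAbs | dBoxI | dBoxC.

Inductive Occ : nat -> term -> list dir -> Prop :=
| occ_var  : forall x, Occ x (Var x) []
| occ_appl : forall x M N p, Occ x M p -> Occ x (App M N) (dAppL :: p)
| occ_appr : forall x M N p, Occ x N p -> Occ x (App M N) (dAppR :: p)
| occ_lam  : forall x M p, Occ (S x) M p -> Occ x (Lam M) (dAbs :: p)
| occ_lamI : forall x M p, Occ (S x) M p -> Occ x (LamI M) (dAbs :: p)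
| occ_lamC : forall x M p, Occ (S x) M p -> Occ x (LamC M) (dAbs :: p)
| occ_boxI : forall x M p, Occ x M p -> Occ x (BoxI M) (dBoxI :: p)
| occ_boxC : forall x M p, Occ x M p -> Occ x (BoxC M) (dBoxC :: p).

Definition nfo (x : nat) (M : term) (c : nat) : Prop :=
  exists l : list (list dir),
    NoDup l /\ (forall p, In p l <-> Occ x M p) /\ length l = c.

Inductive Wt (k : nat) : nat -> term -> nat -> Prop :=
| w0_var  : forall x, Wt k 0 (Var x) 1
| w0_boxI : forall M w, Wt k 0 M w -> Wt k 0 (BoxI M) (k * w)
| w0_boxC : forall M, Wt k 0 (BoxC M) 0
| w0_app  : forall M N a b, Wt k 0 M a -> Wt k 0 N b -> Wt k 0 (App M N) (a + b)
| w0_lam  : forall M w, Wt k 0 M w -> Wt k 0 (Lam M) (w + 1)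
| w0_lamI : forall M w, Wt k 0 M w -> Wt k 0 (LamI M) (w + 1)
| w0_lamC : forall M w, Wt k 0 M w -> Wt k 0 (LamC M) (w + 1)
| wS_var  : forall m x, Wt k (S m) (Var x) 0
| wS_boxI : forall m M w, Wt k (S m) M w -> Wt k (S m) (BoxI M) w
| wS_boxC : forall m M w, Wt k m M w -> Wt k (S m) (BoxC M) w
| wS_app  : forall m M N a b, Wt k (S m) M a -> Wt k (S m) N b ->
              Wt k (S m) (App M N) (a + b)
| wS_lam  : forall m M w, Wt k (S m) M w -> Wt k (S m) (Lam M) w
| wS_lamI : forall m M w, Wt k (S m) M w -> Wt k (S m) (LamI M) w
| wS_lamC : forall m M w, Wt k (S m) M w -> Wt k (S m) (LamC M) w.

Inductive Dup : nat -> term -> nat -> Prop :=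
| d0_var  : forall x, Dup 0 (Var x) 1
| d0_boxI : forall M d, Dup 0 M d -> Dup 0 (BoxI M) d
| d0_boxC : forall M, Dup 0 (BoxC M) 1
| d0_app  : forall M N a b, Dup 0 M a -> Dup 0 N b -> Dup 0 (App M N) (Nat.max a b)
| d0_lam  : forall M d, Dup 0 M d -> Dup 0 (Lam M) d
| d0_lamC : forall M d, Dup 0 M d -> Dup 0 (LamC M) d
| d0_lamI : forall M d c, Dup 0 M d -> nfo 0 M c -> Dup 0 (LamI M) (Nat.max c d)
| dS_var  : forall m x, Dup (S m) (Var x) 1
| dS_boxI : forall m M d, Dup (S m) M d -> Dup (S m) (BoxI M) d
| dS_boxC : forall m M d, Dup m M d -> Dup (S m) (BoxC M) d
| dS_app  : forall m M N a b, Dup (S m) M a -> Dup (S m) N b ->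
              Dup (S m) (App M N) (Nat.max a b)
| dS_lam  : forall m M d, Dup (S m) M d -> Dup (S m) (Lam M) d
| dS_lamI : forall m M d, Dup (S m) M d -> Dup (S m) (LamI M) d
| dS_lamC : forall m M d, Dup (S m) M d -> Dup (S m) (LamC M) d.

(* calW n M v  :  \mathcal{W}_n(M) = W^{D_n(M)}_n(M) = v *)
Definition calW (n : nat) (M : term) (v : nat) : Prop :=
  exists d, Dup n M d /\ Wt d n M v.

(* Main.v *)
Require Import Defs.
From Stdlib Require Import Arith Lia List.
Import ListNotations.

Definition frob (t : term) : term :=
  match t with
  | Var x => Var x | App a b => App a b | Lam a => Lam a | LamI a => LamI a
  | LamC a => LamC a | BoxI a => BoxI a | BoxC a => BoxC a end.
Lemma frob_eq t : t = frob t. Proof. destruct t; reflexivity. Qed.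

Ltac unf := lazymatch goal with |- ?l = _ => transitivity (frob l); [apply frob_eq|reflexivity] end.

Lemma ren_var r x : ren r (Var x) = Var (r x). Proof. unf. Qed.
Lemma ren_app r a b : ren r (App a b) = App (ren r a) (ren r b). Proof. unf. Qed.
Lemma ren_lam r a : ren r (Lam a) = Lam (ren (uprn r) a). Proof. unf. Qed.
Lemma ren_lamI r a : ren r (LamI a) = LamI (ren (uprn r) a). Proof. unf. Qed.
Lemma ren_lamC r a : ren r (LamC a) = LamC (ren (uprn r) a). Proof. unf. Qed.
Lemma ren_boxI r a : ren r (BoxI a) = BoxI (ren r a). Proof. unf. Qed.
Lemma ren_boxC r a : ren r (BoxC a) = BoxC (ren r a). Proof. unf. Qed.
Lemma subst_var s x : subst s (Var x) = s x. Proof. transitivity (frob (subst s (Var x))); [apply frob_eq|]. simpl. symmetry; apply frob_eq. Qed.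
Lemma subst_app s a b : subst s (App a b) = App (subst s a) (subst s b). Proof. unf. Qed.
Lemma subst_lam s a : subst s (Lam a) = Lam (subst (up s) a). Proof. unf. Qed.
Lemma subst_lamI s a : subst s (LamI a) = LamI (subst (up s) a). Proof. unf. Qed.
Lemma subst_lamC s a : subst s (LamC a) = LamC (subst (up s) a). Proof. unf. Qed.
Lemma subst_boxI s a : subst s (BoxI a) = BoxI (subst s a). Proof. unf. Qed.
Lemma subst_boxC s a : subst s (BoxC a) = BoxC (subst s a). Proof. unf. Qed.

#[export] Hint Rewrite ren_var ren_app ren_lam ren_lamI ren_lamC ren_boxI ren_boxC
  subst_var subst_app subst_lam subst_lamI subst_lamC subst_boxI subst_boxC : tm.

Lemma Occ_ren_fwd x M p : Occ x M p -> forall r, Occ (r x) (ren r M) p.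
Proof.
  induction 1; intros r; autorewrite with tm; constructor; auto.
  all: apply (IHOcc (uprn r)).
Qed.

Lemma Occ_ren_bwd y T p : Occ y T p -> forall r M, T = ren r M -> exists x, r x = y /\ Occ x M p.
Proof.
  induction 1; intros r M0 E; destruct M0; autorewrite with tm in E; try discriminate E;
    injection E; intros; subst.
  - exists n; split; auto; constructor.
  - destruct (IHOcc r M0_1 eq_refl) as [z [? ?]]. exists z; split; auto; constructor; auto.
  - destruct (IHOcc r M0_2 eq_refl) as [z [? ?]]. exists z; split; auto; constructor; auto.
  - destruct (IHOcc _ _ eq_refl) as [[|z] [Hz ?]]; simpl in Hz; try discriminate.
    injection Hz; intros; subst. exists z; split; auto; constructor; auto.
  - destruct (IHOcc _ _ eq_refl) as [[|z] [Hz ?]]; simpl in Hz; try discriminate.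
    injection Hz; intros; subst. exists z; split; auto; constructor; auto.
  - destruct (IHOcc _ _ eq_refl) as [[|z] [Hz ?]]; simpl in Hz; try discriminate.
    injection Hz; intros; subst. exists z; split; auto; constructor; auto.
  - destruct (IHOcc r M0 eq_refl) as [z [? ?]]. exists z; split; auto; constructor; auto.
  - destruct (IHOcc r M0 eq_refl) as [z [? ?]]. exists z; split; auto; constructor; auto.
Qed.

Lemma Occ_ren_S x t p : Occ x (ren S t) p -> exists y, x = S y /\ Occ y t p.
Proof. intro H. destruct (Occ_ren_bwd _ _ _ H S t eq_refl) as [z [? ?]]. exists z; auto. Qed.

Lemma Occ_subst_fwd z M q : Occ z M q -> forall s y t, Occ y (s z) t -> Occ y (subst s M) (q ++ t).
Proof.
  induction 1; intros s y t Ht; autorewrite with tm; simpl; auto; constructor; auto.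
  all: apply IHOcc; simpl; apply (Occ_ren_fwd _ _ _ Ht S).
Qed.

Lemma Occ_subst_bwd y T p : Occ y T p -> forall s M, T = subst s M ->
  exists z q t, Occ z M q /\ Occ y (s z) t /\ p = q ++ t.
Proof.
  induction 1; intros s M0 E; destruct M0; autorewrite with tm in E; try discriminate E.
  all: match goal with
       | E : ?T = ?s ?z |- exists _ _ _, _ /\ _ /\ ?P = _ =>
           lazymatch type of z with nat => idtac end;
           exists z, [], P; split; [apply occ_var|split; [rewrite <- E; constructor; eassumption|reflexivity]]
       | _ => idtac end.
  all: injection E; intros; subst.
  - destruct (IHOcc s M0_1 eq_refl) as [z [q [t [? [? ?]]]]]. subst.
    exists z, (dAppL :: q), t; repeat split; auto; constructor; auto.
  - destruct (IHOcc s M0_2 eq_refl) as [z [q [t [? [? ?]]]]]. subst.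
    exists z, (dAppR :: q), t; repeat split; auto; constructor; auto.
  - destruct (IHOcc _ M0 eq_refl) as [[|z] [q [t [? [Ht ?]]]]]; subst; simpl in Ht.
    + inversion Ht.
    + destruct (Occ_ren_S _ _ _ Ht) as [y [Ey ?]]. injection Ey; intros; subst.
      exists z, (dAbs :: q), t; repeat split; auto; constructor; auto.
  - destruct (IHOcc _ M0 eq_refl) as [[|z] [q [t [? [Ht ?]]]]]; subst; simpl in Ht.
    + inversion Ht.
    + destruct (Occ_ren_S _ _ _ Ht) as [y [Ey ?]]. injection Ey; intros; subst.
      exists z, (dAbs :: q), t; repeat split; auto; constructor; auto.
  - destruct (IHOcc _ M0 eq_refl) as [[|z] [q [t [? [Ht ?]]]]]; subst; simpl in Ht.
    + inversion Ht.
    + destruct (Occ_ren_S _ _ _ Ht) as [y [Ey ?]]. injection Ey; intros; subst.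
      exists z, (dAbs :: q), t; repeat split; auto; constructor; auto.
  - destruct (IHOcc s M0 eq_refl) as [z [q [t [? [? ?]]]]]. subst.
    exists z, (dBoxI :: q), t; repeat split; auto; constructor; auto.
  - destruct (IHOcc s M0 eq_refl) as [z [q [t [? [? ?]]]]]. subst.
    exists z, (dBoxC :: q), t; repeat split; auto; constructor; auto.
Qed.

Definition OccList x M l := NoDup l /\ forall p, In p l <-> Occ x M p.

Lemma OccList_len x M l1 l2 : OccList x M l1 -> OccList x M l2 -> length l1 = length l2.
Proof.
  intros [N1 H1] [N2 H2].
  apply Nat.le_antisymm; apply NoDup_incl_length; auto; intros p Hp.
  - apply H2, H1, Hp.
  - apply H1, H2, Hp.
Qed.

Lemma nfo_iff x M c : nfo x M c <-> exists l, OccList x M l /\ length l = c.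
Proof.
  split.
  - intros [l [A [B C]]]. exists l. split; [split|]; auto.
  - intros [l [[A B] C]]. exists l. split; [|split]; auto.
Qed.

Lemma nfo_fun x M c1 c2 : nfo x M c1 -> nfo x M c2 -> c1 = c2.
Proof. rewrite !nfo_iff. intros [l1 [A ?]] [l2 [B ?]]; subst. apply (OccList_len _ _ _ _ A B). Qed.

Lemma OccList_ext x M l y N : OccList x M l -> (forall p, Occ x M p <-> Occ y N p) -> OccList y N l.
Proof. intros [A B] C; split; auto; intro p; rewrite B; apply C. Qed.

Lemma nfo_ext x M c y N : nfo x M c -> (forall p, Occ x M p <-> Occ y N p) -> nfo y N c.
Proof. rewrite !nfo_iff. intros [l [A B]] C; exists l; split; auto; eapply OccList_ext; eauto. Qed.

Lemma bisim_sym : forall a b, bisim a b -> bisim b a.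
Proof.
  cofix CH. intros a b H; destruct H; constructor; apply CH; assumption.
Qed.

Lemma Occ_bisim x A p : Occ x A p -> forall B, bisim A B -> Occ x B p.
Proof. induction 1; intros B HB; inversion HB; subst; constructor; auto. Qed.

Lemma Occ_bisim_iff x A B : bisim A B -> forall p, Occ x A p <-> Occ x B p.
Proof. intros H p; split; intro; eapply Occ_bisim; eauto using bisim_sym. Qed.

Lemma Wt_bisim k m A w : Wt k m A w -> forall B, bisim A B -> Wt k m B w.
Proof. induction 1; intros B HB; inversion HB; subst; constructor; auto. Qed.

Lemma Dup_bisim m A d : Dup m A d -> forall B, bisim A B -> Dup m B d.
Proof.
  induction 1; intros B HB; inversion HB; subst; constructor; auto.
  eapply nfo_ext; eauto. apply Occ_bisim_iff; auto.
Qed.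

Lemma Wt_ren k m M w : Wt k m M w -> forall r, Wt k m (ren r M) w.
Proof. induction 1; intros r; autorewrite with tm; constructor; auto. Qed.

Lemma Occ0_ren_uprn r B p : Occ 0 (ren (uprn r) B) p <-> Occ 0 B p.
Proof.
  split; intro H.
  - destruct (Occ_ren_bwd _ _ _ H _ _ eq_refl) as [[|z] [Hz ?]]; simpl in Hz; [auto|discriminate].
  - apply (Occ_ren_fwd _ _ _ H (uprn r)).
Qed.

Lemma Dup_ren m M d : Dup m M d -> forall r, Dup m (ren r M) d.
Proof.
  induction 1; intros r; autorewrite with tm; constructor; auto.
  eapply nfo_ext; eauto. intro p; rewrite Occ0_ren_uprn; tauto.
Qed.

Lemma Wt_fun k m M w1 : Wt k m M w1 -> forall w2, Wt k m M w2 -> w1 = w2.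
Proof. induction 1; intros w2 H2; inversion H2; subst; auto; f_equal; auto. Qed.

Lemma Dup_fun m M d1 : Dup m M d1 -> forall d2, Dup m M d2 -> d1 = d2.
Proof.
  induction 1; intros d2 H2; inversion H2; subst; auto; f_equal; auto.
  eapply nfo_fun; eauto.
Qed.

Lemma Dup_pos m M d : Dup m M d -> 1 <= d.
Proof. induction 1; lia. Qed.

Lemma Wt_mono k m M w : Wt k m M w -> forall k', k <= k' -> exists w', Wt k' m M w' /\ w <= w'.
Proof.
  induction 1; intros k' Hk.
  all: repeat match goal with IH : forall k', ?k0 <= k' -> _ |- _ =>
      destruct (IH k' Hk) as [? [? ?]]; clear IH end.
  all: eexists; split; [constructor; eassumption|]; try nia.
Qed.

Lemma Wt_anyk k m M w : Wt k m M w -> forall k', exists w', Wt k' m M w'.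
Proof.
  induction 1; intros k'.
  all: repeat match goal with IH : forall k', exists _, _ |- _ =>
      destruct (IH k') as [? ?]; clear IH end.
  all: eexists; constructor; eassumption.
Qed.

Lemma NoDup_map_inj {A B} (f : A -> B) l : (forall a b, f a = f b -> a = b) -> NoDup l -> NoDup (map f l).
Proof. intros Hf H. apply NoDup_map_NoDup_ForallPairs; auto. intros a b _ _; apply Hf. Qed.

Lemma OL_var x y : OccList x (Var y) (if Nat.eqb x y then [[]] else []).
Proof.
  split.
  - destruct (Nat.eqb x y); repeat constructor; simpl; tauto.
  - intro p; destruct (Nat.eqb_spec x y); subst; simpl; split; intro H.
    + destruct H as [<-|[]]; constructor.
    + inversion H; auto.
    + destruct H.
    + inversion H; subst; tauto.
Qed.

Lemma OL_nil x M : (forall p, ~ Occ x M p) -> OccList x M [].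
Proof. intro H; split; [constructor|]; intro p; split; [intros []|intro O; exact (H p O)]. Qed.

Lemma OL_app x A B l1 l2 : OccList x A l1 -> OccList x B l2 ->
  OccList x (App A B) (map (cons dAppL) l1 ++ map (cons dAppR) l2).
Proof.
  intros [N1 H1] [N2 H2]; split.
  - apply NoDup_app; try (apply NoDup_map_inj; auto; intros a b E; injection E; auto).
    intros a Ha Hb. apply in_map_iff in Ha, Hb. destruct Ha as [? [<- _]]; destruct Hb as [? [E _]]; discriminate.
  - intro p; rewrite in_app_iff, !in_map_iff; split.
    + intros [[q [<- Hq]]|[q [<- Hq]]]; constructor; apply H1 || apply H2; auto.
    + intro O; inversion O; subst; [left|right]; eexists; split; eauto; apply H1 || apply H2; auto.
Qed.

Ltac OL1 H1 := split; [apply NoDup_map_inj; [intros a b E; injection E; auto|]; apply H1|];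
  let p := fresh "p" in intro p; rewrite in_map_iff; split;
  [intros [q [<- Hq]]; constructor; apply H1; auto
  |intro O; inversion O; subst; eexists; split; eauto; apply H1; auto].

Lemma OL_lam x A l : OccList (S x) A l -> OccList x (Lam A) (map (cons dAbs) l).
Proof. intros H1; OL1 H1. Qed.
Lemma OL_lamI x A l : OccList (S x) A l -> OccList x (LamI A) (map (cons dAbs) l).
Proof. intros H1; OL1 H1. Qed.
Lemma OL_lamC x A l : OccList (S x) A l -> OccList x (LamC A) (map (cons dAbs) l).
Proof. intros H1; OL1 H1. Qed.
Lemma OL_boxI x A l : OccList x A l -> OccList x (BoxI A) (map (cons dBoxI) l).
Proof. intros H1; OL1 H1. Qed.
Lemma OL_boxC x A l : OccList x A l -> OccList x (BoxC A) (map (cons dBoxC) l).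
Proof. intros H1; OL1 H1. Qed.

Definition closed (R : env -> term -> Prop) := forall G M, R G M -> derI R G M.

Lemma OccNone R : closed R -> forall x M p, Occ x M p -> forall G, derI R G M -> G x = None -> False.
Proof.
  intros HR x M p O; induction O; intros G D HG; inversion D; subst.
  all: try (match goal with H : var_env _ _ _ |- _ => destruct H as [H' _]; congruence end).
  all: try (match goal with H : app_split _ _ _ |- _ => specialize (H x); rewrite HG in H; destruct H end).
  all: eauto.
  all: try (match goal with H : mi_env _ _ |- _ => specialize (H x); rewrite HG in H end); eauto.
  match goal with H : mc_env _ _ |- _ => specialize (H x); rewrite HG in H end; eauto.
Qed.

Definition okk (o : option kind) : Prop :=
  match o with None | Some KLin | Some KDown | Some KHash => True | _ => False end.
Definition linish (o : option kind) : Prop :=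
  match o with Some KLin | Some KDown => True | _ => False end.

Lemma occ_list R : closed R -> forall G M, derI R G M -> forall x, okk (G x) ->
  exists l, OccList x M l /\ (linish (G x) -> length l <= 1) /\ (G x = None -> l = []).
Proof.
  intros HR G M D; induction D; intros y Hy.
  1-3: (eexists; split; [apply OL_var|]; destruct H as [H1 H2];
        destruct (Nat.eqb_spec y x); subst; simpl; split; auto; intro E; congruence).
  -
    pose proof (H y) as Hs.
    destruct (G y) as [[]|] eqn:Ey; simpl in Hy; try contradiction.
    + destruct Hs as [[A B]|[A B]].
      * destruct (IHD1 y) as [l1 [O1 [L1 _]]]; [rewrite A; exact I|].
        destruct (IHD2 y) as [l2 [O2 [_ Z2]]]; [rewrite B; exact I|].
        rewrite (Z2 B) in O2. eexists; split; [apply (OL_app _ _ _ _ _ O1 O2)|].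
        rewrite A in L1; simpl in *. rewrite ?app_nil_r, ?length_app, ?length_map; simpl. split; [|discriminate]. intros _; specialize (L1 I); lia.
      * destruct (IHD1 y) as [l1 [O1 [_ Z1]]]; [rewrite A; exact I|].
        destruct (IHD2 y) as [l2 [O2 [L2 _]]]; [rewrite B; exact I|].
        rewrite (Z1 A) in O1. eexists; split; [apply (OL_app _ _ _ _ _ O1 O2)|].
        rewrite B in L2; simpl in *. rewrite ?app_nil_r, ?length_app, ?length_map; simpl. split; [|discriminate]. intros _; specialize (L2 I); lia.
    + destruct Hs as [[A B]|[A B]].
      * destruct (IHD1 y) as [l1 [O1 [L1 _]]]; [rewrite A; exact I|].
        destruct (IHD2 y) as [l2 [O2 [_ Z2]]]; [rewrite B; exact I|].
        rewrite (Z2 B) in O2. eexists; split; [apply (OL_app _ _ _ _ _ O1 O2)|].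
        rewrite A in L1; simpl in *. rewrite ?app_nil_r, ?length_app, ?length_map; simpl. split; [|discriminate]. intros _; specialize (L1 I); lia.
      * destruct (IHD1 y) as [l1 [O1 [_ Z1]]]; [rewrite A; exact I|].
        destruct (IHD2 y) as [l2 [O2 [L2 _]]]; [rewrite B; exact I|].
        rewrite (Z1 A) in O1. eexists; split; [apply (OL_app _ _ _ _ _ O1 O2)|].
        rewrite B in L2; simpl in *. rewrite ?app_nil_r, ?length_app, ?length_map; simpl. split; [|discriminate]. intros _; specialize (L2 I); lia.
    + destruct Hs as [A B].
      destruct (IHD1 y) as [l1 [O1 _]]; [rewrite A; exact I|].
      destruct (IHD2 y) as [l2 [O2 _]]; [rewrite B; exact I|].
      eexists; split; [apply (OL_app _ _ _ _ _ O1 O2)|]. simpl; split; [intros []|discriminate].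
    + destruct Hs as [A B].
      destruct (IHD1 y) as [l1 [O1 [_ Z1]]]; [rewrite A; exact I|].
      destruct (IHD2 y) as [l2 [O2 [_ Z2]]]; [rewrite B; exact I|].
      rewrite (Z1 A) in O1; rewrite (Z2 B) in O2.
      eexists; split; [apply (OL_app _ _ _ _ _ O1 O2)|]. simpl; split; [intros []|auto].
  - destruct (IHD (S y) Hy) as [l [O [L Z]]]. eexists; split; [apply (OL_lam _ _ _ O)|].
    rewrite length_map; split; auto. intro E; rewrite (Z E); reflexivity.
  - destruct (IHD (S y) Hy) as [l [O [L Z]]]. eexists; split; [apply (OL_lamI _ _ _ O)|].
    rewrite length_map; split; auto. intro E; rewrite (Z E); reflexivity.
  - destruct (IHD (S y) Hy) as [l [O [L Z]]]. eexists; split; [apply (OL_lamI _ _ _ O)|].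
    rewrite length_map; split; auto. intro E; rewrite (Z E); reflexivity.
  - destruct (IHD (S y) Hy) as [l [O [L Z]]]. eexists; split; [apply (OL_lamC _ _ _ O)|].
    rewrite length_map; split; auto. intro E; rewrite (Z E); reflexivity.
  - pose proof (H y) as Hm.
    destruct (G y) as [[]|] eqn:Ey; simpl in Hy; try contradiction.
    + destruct (IHD y) as [l [O [L Z]]]; [rewrite Hm; exact I|].
      eexists; split; [apply (OL_boxI _ _ _ O)|]. rewrite length_map; rewrite Hm in L; simpl in *; split; [auto|discriminate].
    + destruct (IHD y) as [l [O [L Z]]]; [rewrite Hm; exact I|].
      rewrite (Z Hm) in O. eexists; split; [apply (OL_boxI _ _ _ O)|]. simpl; split; [intros []|discriminate].
    + destruct (IHD y) as [l [O [L Z]]]; [rewrite Hm; exact I|].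
      rewrite (Z Hm) in O. eexists; split; [apply (OL_boxI _ _ _ O)|]. simpl; split; [intros []|auto].
  - pose proof (H y) as Hm.
    assert (G' y = None -> exists l, OccList y (BoxC M) l /\ (linish (G y) -> length l <= 1) /\ (G y = None -> l = [])) as Hc.
    { intro E. exists []; split; [|simpl; split; auto; lia]. apply OL_nil. intros p O; inversion O; subst.
      eapply (OccNone R HR); eauto. }
    destruct (G y) as [[]|] eqn:Ey; simpl in Hy; try contradiction; auto.
Qed.

Inductive Cnt (k : nat) : nat -> term -> nat -> Prop :=
| c_var : forall x y, Cnt k x (Var y) (if Nat.eqb y x then 1 else 0)
| c_app : forall x A B a b, Cnt k x A a -> Cnt k x B b -> Cnt k x (App A B) (a + b)
| c_lam : forall x A a, Cnt k (S x) A a -> Cnt k x (Lam A) a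
| c_lamI : forall x A a, Cnt k (S x) A a -> Cnt k x (LamI A) a
| c_lamC : forall x A a, Cnt k (S x) A a -> Cnt k x (LamC A) a
| c_boxI : forall x A a, Cnt k x A a -> Cnt k x (BoxI A) (k * a)
| c_boxC : forall x A, Cnt k x (BoxC A) 0.

Definition SL x M l c := NoDup l /\ length l = c /\ forall p, In p l -> Occ x M p.

Definition spec k (o : option kind) x M c : Prop :=
  match o with
  | None | Some KUp => c = 0
  | Some KLin => c <= 1
  | Some KDown => c <= k
  | Some KHash => exists l, SL x M l c
  | Some KDag => True
  end.

Lemma SL_nil x M : SL x M [] 0.
Proof. repeat split; [constructor|intros p []]. Qed.

Lemma SL_app x A B l1 l2 a b : SL x A l1 a -> SL x B l2 b ->
  SL x (App A B) (map (cons dAppL) l1 ++ map (cons dAppR) l2) (a + b).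
Proof.
  intros [N1 [L1 H1]] [N2 [L2 H2]]; repeat split.
  - apply NoDup_app; try (apply NoDup_map_inj; auto; intros u v E; injection E; auto).
    intros u Ha Hb. apply in_map_iff in Ha, Hb. destruct Ha as [? [<- _]]; destruct Hb as [? [E _]]; discriminate.
  - rewrite length_app, !length_map; lia.
  - intro p; rewrite in_app_iff, !in_map_iff.
    intros [[q [<- Hq]]|[q [<- Hq]]]; constructor; auto.
Qed.

Ltac SL1 := let N1 := fresh in let L1 := fresh in let H1 := fresh in
  intros [N1 [L1 H1]]; repeat split; [apply NoDup_map_inj; [intros u v E; injection E; auto|auto]
   | rewrite length_map; auto
   | intros p; rewrite in_map_iff; intros [q [<- Hq]]; constructor; auto].

Lemma SL_lam x A l c : SL (S x) A l c -> SL x (Lam A) (map (cons dAbs) l) c. Proof. SL1. Qed.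
Lemma SL_lamI x A l c : SL (S x) A l c -> SL x (LamI A) (map (cons dAbs) l) c. Proof. SL1. Qed.
Lemma SL_lamC x A l c : SL (S x) A l c -> SL x (LamC A) (map (cons dAbs) l) c. Proof. SL1. Qed.

Lemma cnt_spec R k G M : derI R G M -> forall x c, Cnt k x M c -> spec k (G x) x M c.
Proof.
  induction 1; intros y c HC; inversion HC; subst;
  repeat match goal with IH : forall x c, Cnt k x ?T c -> _, HC : Cnt k _ ?T _ |- _ => specialize (IH _ _ HC) end.
  1-3: destruct H as [H1 H2]; destruct (Nat.eqb_spec x y); subst;
     [rewrite H1; simpl; auto;
      try (exists [[]]; repeat split; [repeat constructor; simpl; tauto| intros p [<-|[]]; constructor])
     |specialize (H2 y (fun E => n (eq_sym E))); destruct (G y) as [[]|]; simpl in *; auto; try contradiction;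
      exists []; apply SL_nil].
  - specialize (H y).
    destruct (G y) as [[]|]; simpl in *.
    + destruct H as [[A B]|[A B]]; rewrite A in IHderI1; rewrite B in IHderI2; simpl in *; lia.
    + destruct H as [[A B]|[A B]]; rewrite A in IHderI1; rewrite B in IHderI2; simpl in *; lia.
    + destruct H as [A B]; rewrite A in IHderI1; rewrite B in IHderI2; simpl in *; lia.
    + destruct H as [A B]; rewrite A in IHderI1; rewrite B in IHderI2; simpl in *.
      destruct IHderI1 as [l1 S1]; destruct IHderI2 as [l2 S2]; eexists; apply SL_app; eauto.
    + auto.
    + destruct H as [A B]; rewrite A in IHderI1; rewrite B in IHderI2; simpl in *; lia.
  - simpl in IHderI; destruct (G y) as [[]|]; simpl in *; auto.
    destruct IHderI as [l S1]; eexists; apply SL_lam; eauto.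
  - simpl in IHderI; destruct (G y) as [[]|]; simpl in *; auto.
    destruct IHderI as [l S1]; eexists; apply SL_lamI; eauto.
  - simpl in IHderI; destruct (G y) as [[]|]; simpl in *; auto.
    destruct IHderI as [l S1]; eexists; apply SL_lamI; eauto.
  - simpl in IHderI; destruct (G y) as [[]|]; simpl in *; auto.
    destruct IHderI as [l S1]; eexists; apply SL_lamC; eauto.
  - specialize (H y).
    destruct (G y) as [[]|]; simpl in *; try contradiction; rewrite H in IHderI; simpl in *; subst; auto; try nia.
    exists []; rewrite Nat.mul_0_r; apply SL_nil.
  - destruct (G y) as [[]|]; simpl; auto; try lia. exists []; apply SL_nil.
Qed.

Inductive Occ0 : nat -> term -> Prop :=
| o0_var : forall x, Occ0 x (Var x)
| o0_appl : forall x A B, Occ0 x A -> Occ0 x (App A B)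
| o0_appr : forall x A B, Occ0 x B -> Occ0 x (App A B)
| o0_lam : forall x A, Occ0 (S x) A -> Occ0 x (Lam A)
| o0_lamI : forall x A, Occ0 (S x) A -> Occ0 x (LamI A)
| o0_lamC : forall x A, Occ0 (S x) A -> Occ0 x (LamC A)
| o0_boxI : forall x A, Occ0 x A -> Occ0 x (BoxI A).

Lemma occ0_typing R G M : derI R G M -> forall x, Occ0 x M -> G x <> None /\ G x <> Some KUp.
Proof.
  induction 1; intros y O; inversion O; subst.
  1-3: destruct H as [H1 _]; rewrite H1; split; discriminate.
  - specialize (H y); destruct (IHderI1 y) as [A B]; auto.
    destruct (G y) as [[]|]; try (split; discriminate); [destruct H as [C _]|destruct H as [C _]]; congruence.
  - specialize (H y); destruct (IHderI2 y) as [A B]; auto.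
    destruct (G y) as [[]|]; try (split; discriminate); [destruct H as [_ C]|destruct H as [_ C]]; congruence.
  - apply (IHderI (S y)); auto.
  - apply (IHderI (S y)); auto.
  - apply (IHderI (S y)); auto.
  - apply (IHderI (S y)); auto.
  - specialize (H y); destruct (IHderI y) as [A B]; auto.
    destruct (G y) as [[]|]; try (split; discriminate); congruence.
Qed.

Lemma exist_WD R : closed R -> forall m G M, derI R G M ->
  (forall k, exists w, Wt k m M w) /\ exists d, Dup m M d.
Proof.
  intros HR m; induction m as [|m IHm]; intros G M D; induction D.
  all: try (split; [intro k; eexists; constructor; fail|eexists; constructor; fail]).
  all: try (destruct IHD1 as [W1 [d1 D1']]; destruct IHD2 as [W2 [d2 D2']];
       split; [intro k; destruct (W1 k) as [w1 ?]; destruct (W2 k) as [w2 ?]; eexists; constructor; eauto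
              |eexists; constructor; eauto]; fail).
  all: try (destruct IHD as [W1 [d1 D1']];
       split; [intro k; destruct (W1 k) as [w1 ?]; eexists; constructor; eauto
              |eexists; constructor; eauto]; fail).
  all: try (destruct (IHm _ _ (HR _ _ H0)) as [W1 [d1 D1']];
       split; [intro k; destruct (W1 k) as [w1 ?]; eexists; constructor; eauto
              |eexists; constructor; eauto]; fail).
  - destruct IHD as [W1 [d1 D1']].
    destruct (occ_list R HR _ _ D 0 I) as [l [O _]].
    split; [intro k; destruct (W1 k) as [w1 ?]; eexists; constructor; eauto|].
    eexists; apply d0_lamI; eauto. apply nfo_iff; eauto.
  - destruct IHD as [W1 [d1 D1']].
    destruct (occ_list R HR _ _ D 0 I) as [l [O _]].
    split; [intro k; destruct (W1 k) as [w1 ?]; eexists; constructor; eauto|].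
    eexists; apply d0_lamI; eauto. apply nfo_iff; eauto.
Qed.

Lemma Wt_subst k M w : Wt k 0 M w -> forall s x a,
  (forall y, y <> x -> Wt k 0 (s y) 1) -> Wt k 0 (s x) a ->
  exists c w', Cnt k x M c /\ Wt k 0 (subst s M) w' /\ w' + c = w + c * a.
Proof.
  intro H; remember 0 as z eqn:Ez; induction H; intros s y aa Hs Hx; try discriminate.
  - destruct (Nat.eqb_spec x y); subst.
    + exists 1, aa; split; [pose proof (c_var k y y) as C; rewrite Nat.eqb_refl in C; exact C|].
      rewrite subst_var; split; auto; lia.
    + exists 0, 1; split; [pose proof (c_var k y x) as C; rewrite (proj2 (Nat.eqb_neq x y) n) in C; exact C|].
      rewrite subst_var; split; auto; lia.
  - destruct (IHWt Ez s y aa Hs Hx) as [c [w' [C [W E]]]].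
    exists (k * c), (k * w'); split; [constructor; auto|]; rewrite subst_boxI; split; [constructor; auto|nia].
  - exists 0, 0; split; [constructor|]; rewrite subst_boxC; split; [constructor|lia].
  - destruct (IHWt1 Ez s y aa Hs Hx) as [c1 [w1 [C1 [W1 E1]]]].
    destruct (IHWt2 Ez s y aa Hs Hx) as [c2 [w2 [C2 [W2 E2]]]].
    exists (c1 + c2), (w1 + w2); split; [constructor; auto|]; rewrite subst_app; split; [constructor; auto|nia].
  - assert (Hs' : forall z, z <> S y -> Wt k 0 (up s z) 1).
    { intros [|j] Hj; simpl; [constructor|]. apply Wt_ren, Hs. congruence. }
    destruct (IHWt Ez (up s) (S y) aa Hs' (Wt_ren _ _ _ _ Hx S)) as [c [w' [C [W E]]]].
    exists c, (w' + 1); split; [constructor; auto|]; rewrite subst_lam; split; [constructor; auto|nia].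
  - assert (Hs' : forall z, z <> S y -> Wt k 0 (up s z) 1).
    { intros [|j] Hj; simpl; [constructor|]. apply Wt_ren, Hs. congruence. }
    destruct (IHWt Ez (up s) (S y) aa Hs' (Wt_ren _ _ _ _ Hx S)) as [c [w' [C [W E]]]].
    exists c, (w' + 1); split; [constructor; auto|]; rewrite subst_lamI; split; [constructor; auto|nia].
  - assert (Hs' : forall z, z <> S y -> Wt k 0 (up s z) 1).
    { intros [|j] Hj; simpl; [constructor|]. apply Wt_ren, Hs. congruence. }
    destruct (IHWt Ez (up s) (S y) aa Hs' (Wt_ren _ _ _ _ Hx S)) as [c [w' [C [W E]]]].
    exists c, (w' + 1); split; [constructor; auto|]; rewrite subst_lamC; split; [constructor; auto|nia].
Qed.

Lemma Occ0_up_subst s B p : Occ 0 (subst (up s) B) p <-> Occ 0 B p.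
Proof.
  split; intro H.
  - destruct (Occ_subst_bwd _ _ _ H (up s) B eq_refl) as [[|j] [q [t [O1 [O2 E]]]]]; simpl in O2.
    + inversion O2; subst. rewrite app_nil_r; auto.
    + destruct (Occ_ren_S _ _ _ O2) as [? [E' _]]; discriminate.
  - rewrite <- (app_nil_r p). apply (Occ_subst_fwd _ _ _ H). simpl; constructor.
Qed.

Lemma Dup_subst M d : Dup 0 M d -> forall s D, d <= D ->
  (forall y, Occ0 y M -> exists e, Dup 0 (s y) e /\ e <= D) ->
  exists d', Dup 0 (subst s M) d' /\ d' <= D.
Proof.
  intro H; remember 0 as z eqn:Ez; induction H; intros s D HD Hs; try discriminate.
  - rewrite subst_var. apply Hs; constructor.
  - destruct (IHDup Ez s D HD) as [d' [? ?]]; [intros y O; apply Hs; constructor; auto|].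
    exists d'; rewrite subst_boxI; split; [constructor|]; auto.
  - exists 1; rewrite subst_boxC; split; [constructor|]; auto.
  - destruct (IHDup1 Ez s D) as [d1 [? ?]]; [lia|intros y O; apply Hs; constructor; auto|].
    destruct (IHDup2 Ez s D) as [d2 [? ?]]; [lia|intros y O; apply Hs; apply o0_appr; auto|].
    exists (Nat.max d1 d2); rewrite subst_app; split; [constructor; auto|lia].
  - assert (Hs' : forall y, Occ0 y M -> exists e, Dup 0 (up s y) e /\ e <= D).
    { intros [|j] O; simpl. - exists 1; split; [constructor|]. pose proof (Dup_pos _ _ _ H); lia.
      - destruct (Hs j) as [e [? ?]]; [constructor; auto|]. exists e; split; auto; apply Dup_ren; auto. }
    destruct (IHDup Ez (up s) D HD Hs') as [d' [? ?]].
    exists d'; rewrite subst_lam; split; [constructor|]; auto.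
  - assert (Hs' : forall y, Occ0 y M -> exists e, Dup 0 (up s y) e /\ e <= D).
    { intros [|j] O; simpl. - exists 1; split; [constructor|]. pose proof (Dup_pos _ _ _ H); lia.
      - destruct (Hs j) as [e [? ?]]; [constructor; auto|]. exists e; split; auto; apply Dup_ren; auto. }
    destruct (IHDup Ez (up s) D HD Hs') as [d' [? ?]].
    exists d'; rewrite subst_lamC; split; [constructor|]; auto.
  - assert (Hs' : forall y, Occ0 y M -> exists e, Dup 0 (up s y) e /\ e <= D).
    { intros [|j] O; simpl. - exists 1; split; [constructor|]. pose proof (Dup_pos _ _ _ H); lia.
      - destruct (Hs j) as [e [? ?]]; [constructor; auto|]. exists e; split; auto; apply Dup_ren; auto. }
    destruct (IHDup Ez (up s) D) as [d' [? ?]]; [lia|auto|].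
    exists (Nat.max c d'); rewrite subst_lamI; split; [constructor; auto|lia].
    eapply nfo_ext; eauto. intro p; rewrite Occ0_up_subst; tauto.
Qed.

Definition s0 (N : term) : nat -> term := fun i => match i with 0 => N | S j => Var j end.
Lemma subst0_eq N M : subst0 N M = subst (s0 N) M. Proof. reflexivity. Qed.

Lemma Occ_subst0 x N M p : Occ x (subst0 N M) p ->
  Occ (S x) M p \/ exists q t, Occ 0 M q /\ Occ x N t /\ p = q ++ t.
Proof.
  intro H. destruct (Occ_subst_bwd _ _ _ H (s0 N) M eq_refl) as [[|j] [q [t [O1 [O2 E]]]]]; simpl in O2.
  - right; eauto.
  - inversion O2; subst. left; rewrite app_nil_r; auto.
Qed.

Lemma step_occ_back n M M' : step0 n M M' -> forall x p, Occ x M' p -> exists q, Occ x M q.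
Proof.
  induction 1; intros x p O.
  1-3: destruct (Occ_subst0 _ _ _ _ O) as [O'|[q [t [_ [O' _]]]]]; eexists;
       [apply occ_appl; constructor; eauto| apply occ_appr; try constructor; eauto].
  all: inversion O; subst;
     try (destruct (IHstep0 _ _ ltac:(eassumption)) as [q ?]; eexists; constructor; eassumption);
     eexists; constructor; eassumption.
Qed.

Lemma step_Wt_lt1 n M M' : step0 n M M' -> forall m, m < n -> forall k w, Wt k m M w -> Wt k m M' w.
Proof.
  induction 1; intros m Hm k w HW; try lia; inversion HW; subst; constructor; auto;
    apply IHstep0; auto; lia.
Qed.

Lemma step_Wt_lt2 n M M' : step0 n M M' -> forall m, m < n -> forall k w, Wt k m M' w -> Wt k m M w.
Proof.
  induction 1; intros m Hm k w HW; try lia; inversion HW; subst; constructor; auto;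
    apply IHstep0; auto; lia.
Qed.

Lemma app_okk G G1 G2 x : app_split G G1 G2 -> okk (G x) -> okk (G1 x) /\ okk (G2 x).
Proof.
  intros H Hk; specialize (H x); destruct (G x) as [[]|]; simpl in *; try contradiction;
  repeat match goal with H : _ /\ _ |- _ => destruct H | H : _ \/ _ |- _ => destruct H end;
  repeat match goal with E : ?a = _ |- _ => rewrite E end; simpl; auto.
Qed.

Lemma step_occ_same R n M M' : step0 n M M' -> 0 < n -> closed R -> forall G, derI R G M ->
  forall x, okk (G x) -> forall p, Occ x M p <-> Occ x M' p.
Proof.
  intros St Hn HR; induction St; intros G D x Hx; try lia.
  - inversion D; subst. match goal with H : app_split _ _ _ |- _ => destruct (app_okk _ _ _ x H Hx) as [K1 K2] end.
    intro p; split; intro O; inversion O; subst; constructor; auto.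
    + eapply (IHSt Hn); eauto.
    + eapply (IHSt Hn); eauto.
  - inversion D; subst. match goal with H : app_split _ _ _ |- _ => destruct (app_okk _ _ _ x H Hx) as [K1 K2] end.
    intro p; split; intro O; inversion O; subst; constructor; auto.
    + eapply (IHSt Hn); eauto.
    + eapply (IHSt Hn); eauto.
  - inversion D; subst.
    intro p; split; intro O; inversion O; subst; constructor; eapply (IHSt Hn _ ltac:(eassumption) (S x) Hx); auto.
  - inversion D; subst;
    intro p; split; intro O; inversion O; subst; constructor; eapply (IHSt Hn _ ltac:(eassumption) (S x) Hx); auto.
  - inversion D; subst.
    intro p; split; intro O; inversion O; subst; constructor; eapply (IHSt Hn _ ltac:(eassumption) (S x) Hx); auto.
  - inversion D; subst. assert (K : okk (G' x)).
    { match goal with H : mi_env _ _ |- _ => specialize (H x); destruct (G x) as [[]|]; simpl in *; try contradiction; rewrite H; exact I end. }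
    intro p; split; intro O; inversion O; subst; constructor; eapply (IHSt Hn _ ltac:(eassumption) x K); auto.
  - inversion D; subst. assert (K : G' x = None).
    { match goal with H : mc_env _ _ |- _ => specialize (H x); destruct (G x) as [[]|]; simpl in *; try contradiction; auto end. }
    intro p; split; intro O; exfalso; inversion O; subst.
    + eapply (OccNone R HR); eauto.
    + match goal with H : Occ _ M' _ |- _ => destruct (step_occ_back _ _ _ St _ _ H) as [q Hq] end. eapply (OccNone R HR); eauto.
Qed.

Lemma step_Dup_lt R n M M' : step0 n M M' -> closed R -> forall G, derI R G M ->
  forall m, m < n -> forall d, (Dup m M d -> Dup m M' d) /\ (Dup m M' d -> Dup m M d).
Proof.
  intros St HR; induction St; intros G D m Hm d; try lia.
  - inversion D; subst.
    split; intro HD; inversion HD; subst; constructor; auto; eapply IHSt; eauto.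
  - inversion D; subst.
    split; intro HD; inversion HD; subst; constructor; auto; eapply IHSt; eauto.
  - inversion D; subst.
    split; intro HD; inversion HD; subst; constructor; auto; eapply IHSt; eauto.
  - assert (HH : exists K, derI R K M /\ okk (K 0)).
    { inversion D; subst; eexists; split; eauto; exact I. }
    destruct HH as [K [DK OK]].
    split; intro HD; inversion HD; subst; constructor; auto; try (eapply IHSt; eauto).
    + eapply nfo_ext; eauto. intro p; eapply (step_occ_same R); eauto.
    + eapply nfo_ext; eauto. intro p; symmetry; eapply (step_occ_same R); eauto.
  - inversion D; subst.
    split; intro HD; inversion HD; subst; constructor; auto; eapply IHSt; eauto.
  - inversion D; subst.
    split; intro HD; inversion HD; subst; constructor; auto; eapply IHSt; eauto.
  - inversion D; subst.
    split; intro HD; inversion HD; subst; constructor; auto; eapply IHSt; eauto; lia.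
Qed.

Lemma Occ_pref z M q : Occ z M q -> forall z' q' r r', Occ z' M q' -> q ++ r = q' ++ r' -> q = q'.
Proof.
  induction 1; intros z' q' r r' O E; inversion O; subst; simpl in *; try discriminate; auto;
    injection E; intros E'; f_equal; eauto.
Qed.

Lemma Occ_uniq z M q : Occ z M q -> forall z', Occ z' M q -> z = z'.
Proof.
  induction 1; intros z' O; inversion O; subst; auto.
  all: assert (S x = S z') by eauto; congruence.
Qed.

Definition prodl (lb le : list (list dir)) := flat_map (fun q => map (app q) le) lb.

Lemma prodl_len lb le : length (prodl lb le) = length lb * length le.
Proof. induction lb; simpl; auto. rewrite length_app, length_map, IHlb; lia. Qed.

Lemma in_prodl p lb le : In p (prodl lb le) <-> exists q t, In q lb /\ In t le /\ p = q ++ t.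
Proof.
  unfold prodl; rewrite in_flat_map; split.
  - intros [q [Hq Hp]]; apply in_map_iff in Hp; destruct Hp as [t [<- Ht]]; eauto.
  - intros [q [t [Hq [Ht ->]]]]; exists q; split; auto; apply in_map_iff; eauto.
Qed.

Lemma NoDup_prodl M lb le : NoDup lb -> NoDup le -> (forall q, In q lb -> Occ 0 M q) -> NoDup (prodl lb le).
Proof.
  intros Nb Ne Hb; induction Nb; simpl; [constructor|].
  apply NoDup_app.
  - apply NoDup_map_inj; auto. intros a b E; eapply app_inv_head; eauto.
  - apply IHNb; intros q Hq; apply Hb; right; auto.
  - intros p Hp Hp'. apply in_map_iff in Hp; destruct Hp as [t [<- Ht]].
    apply in_prodl in Hp'; destruct Hp' as [q [t' [Hq [Ht' E]]]].
    assert (x = q) by (eapply (Occ_pref 0 M x); [apply Hb; left; auto| apply Hb; right; eauto| eauto]).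
    subst; contradiction.
Qed.

Lemma OL_subst0 x N M la lb le : OccList (S x) M la -> OccList 0 M lb -> OccList x N le ->
  OccList x (subst0 N M) (la ++ prodl lb le).
Proof.
  intros [Na Ha] [Nb Hb] [Ne He]; split.
  - apply NoDup_app; auto.
    + eapply NoDup_prodl; eauto. intros q Hq; apply Hb; auto.
    + intros p Hp Hp'. apply in_prodl in Hp'; destruct Hp' as [q [t [Hq [Ht E]]]].
      apply Ha in Hp; apply Hb in Hq.
      subst p. assert (E : q ++ t = q) by (apply (Occ_pref _ _ _ Hp 0 q [] t Hq); rewrite app_nil_r; auto).
      rewrite E in Hp. pose proof (Occ_uniq _ _ _ Hp _ Hq); discriminate.
  - intro p; rewrite in_app_iff, in_prodl; split.
    + intros [Hp|[q [t [Hq [Ht ->]]]]].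
      * rewrite <- (app_nil_r p). apply Ha in Hp. apply (Occ_subst_fwd _ _ _ Hp (s0 N)); simpl; constructor.
      * apply Hb in Hq; apply He in Ht. apply (Occ_subst_fwd _ _ _ Hq (s0 N)); simpl; auto.
    + intro O; destruct (Occ_subst0 _ _ _ _ O) as [O'|[q [t [Oq [Ot ->]]]]].
      * left; apply Ha; auto.
      * right; exists q, t; split; [apply Hb|split; [apply He|]]; auto.
Qed.

Lemma OL_subst0_none x N M la : OccList (S x) M la -> (forall t, ~ Occ x N t) -> OccList x (subst0 N M) la.
Proof.
  intros [Na Ha] Hn; split; auto; intro p; split.
  - intro Hp; rewrite <- (app_nil_r p). apply Ha in Hp. apply (Occ_subst_fwd _ _ _ Hp (s0 N)); simpl; constructor.
  - intro O; destruct (Occ_subst0 _ _ _ _ O) as [O'|[q [t [Oq [Ot ->]]]]]; [apply Ha; auto|exfalso; eapply Hn; eauto].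
Qed.

Section Inv.
Variable R : env -> term -> Prop.
Lemma inv_app G A B : derI R G (App A B) -> exists G1 G2, app_split G G1 G2 /\ derI R G1 A /\ derI R G2 B.
Proof. intro D; inversion D; subst; eauto. Qed.
Lemma inv_lam G A : derI R G (Lam A) -> derI R (ext KLin G) A.
Proof. intro D; inversion D; subst; eauto. Qed.
Lemma inv_lamI G A : derI R G (LamI A) -> derI R (ext KHash G) A \/ derI R (ext KDown G) A.
Proof. intro D; inversion D; subst; eauto. Qed.
Lemma inv_lamC G A : derI R G (LamC A) -> derI R (ext KUp G) A.
Proof. intro D; inversion D; subst; eauto. Qed.
Lemma inv_boxI G A : derI R G (BoxI A) -> exists G', mi_env G G' /\ derI R G' A.
Proof. intro D; inversion D; subst; eauto. Qed.
Lemma inv_boxC G A : derI R G (BoxC A) -> exists G', mc_env G G' /\ R G' A.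
Proof. intro D; inversion D; subst; eauto. Qed.
End Inv.

Lemma mi_okk G G' x : mi_env G G' -> okk (G x) -> okk (G' x).
Proof. intros H K; specialize (H x); destruct (G x) as [[]|]; simpl in *; try contradiction; rewrite H; exact I. Qed.
Lemma mi_linish G G' x : mi_env G G' -> okk (G x) -> linish (G' x) -> linish (G x).
Proof. intros H K; specialize (H x); destruct (G x) as [[]|]; simpl in *; try contradiction; rewrite H; simpl; auto. Qed.
Lemma mc_none G G' x : mc_env G G' -> okk (G x) -> G' x = None.
Proof. intros H K; specialize (H x); destruct (G x) as [[]|]; simpl in *; try contradiction; auto. Qed.

Lemma app_linish1 G G1 G2 x : app_split G G1 G2 -> linish (G1 x) -> linish (G x) /\ G2 x = None.
Proof.
  intros H L; specialize (H x); destruct (G x) as [[]|]; simpl in *;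
  repeat match goal with H : _ /\ _ |- _ => destruct H | H : _ \/ _ |- _ => destruct H end;
  repeat match goal with E : G1 x = _ |- _ => rewrite E in L end; simpl in *; try contradiction; auto.
Qed.
Lemma app_linish2 G G1 G2 x : app_split G G1 G2 -> linish (G2 x) -> linish (G x) /\ G1 x = None.
Proof.
  intros H L; specialize (H x); destruct (G x) as [[]|]; simpl in *;
  repeat match goal with H : _ /\ _ |- _ => destruct H | H : _ \/ _ |- _ => destruct H end;
  repeat match goal with E : G2 x = _ |- _ => rewrite E in L end; simpl in *; try contradiction; auto.
Qed.

Lemma OccNone_all R : closed R -> forall G M x, derI R G M -> G x = None -> forall p, ~ Occ x M p.
Proof. intros HR G M x D E p O; eapply (OccNone R HR); eauto. Qed.

Lemma step0_count R M M' : step0 0 M M' -> closed R -> forall G, derI R G M -> forall x, okk (G x) ->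
  forall l, OccList x M l ->
  exists l', OccList x M' l' /\ (length l' <= length l \/ (linish (G x) /\ forall d, Dup 0 M d -> length l' <= d)).
Proof.
  intro St; remember 0 as n0 eqn:E0; induction St; intros HR G D x Hx l Hl; try discriminate;
  repeat match goal with E : ?v = 0 |- _ => is_var v; subst v end.
  -
    destruct (inv_app _ _ _ _ D) as [G1 [G2 [Hs [D1 D2]]]]. apply inv_lam in D1.
    destruct (app_okk _ _ _ x Hs Hx) as [K1 K2].
    destruct (occ_list R HR _ _ D1 (S x) K1) as [la [Oa _]].
    destruct (occ_list R HR _ _ D1 0 I) as [lb [Ob [Lb _]]].
    destruct (occ_list R HR _ _ D2 x K2) as [le [Oe _]].
    pose proof (OccList_len _ _ _ _ Hl (OL_app _ _ _ _ _ (OL_lam _ _ _ Oa) Oe)) as HL.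
    rewrite length_app, !length_map in HL. specialize (Lb I).
    exists (la ++ prodl lb le); split; [apply OL_subst0; auto|left].
    rewrite length_app, prodl_len. nia.
  - destruct (inv_app _ _ _ _ D) as [G1 [G2 [Hs [D1 D2]]]].
    destruct (inv_boxI _ _ _ D2) as [G' [Hmi DN]].
    destruct (app_okk _ _ _ x Hs Hx) as [K1 K2]. pose proof (mi_okk _ _ x Hmi K2) as KN.
    destruct (occ_list R HR _ _ DN x KN) as [le [Oe [Le Ze]]].
    destruct (inv_lamI _ _ _ D1) as [DM|DM].
    + destruct (occ_list R HR _ _ DM (S x) K1) as [la [Oa [_ Za]]].
      destruct (occ_list R HR _ _ DM 0 I) as [lb [Ob _]].
      pose proof (OccList_len _ _ _ _ Hl (OL_app _ _ _ _ _ (OL_lamI _ _ _ Oa) (OL_boxI _ _ _ Oe))) as HL.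
      rewrite length_app, !length_map in HL.
      exists (la ++ prodl lb le); split; [apply OL_subst0; auto|].
      rewrite length_app, prodl_len.
      destruct (G' x) as [[]|] eqn:EN.
      * (* G' x = Lin : came from Down *)
        assert (L2 : linish (G2 x)) by (apply (mi_linish _ _ _ Hmi K2); rewrite EN; exact I).
        destruct (app_linish2 _ _ _ x Hs L2) as [LG Z1].
        simpl in Za. rewrite (Za Z1) in *. simpl in *. specialize (Le I).
        right; split; auto. intros d HD; inversion HD; subst.
        match goal with H : Dup 0 (LamI M) _ |- _ => inversion H; subst end.
        match goal with H : nfo 0 M _ |- _ => apply nfo_iff in H; destruct H as [lb' [Ob' Lb']] end.
        rewrite (OccList_len _ _ _ _ Ob Ob'). nia.
      * exfalso; specialize (Hmi x); destruct (G2 x) as [[]|]; simpl in *; congruence.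
      * exfalso; specialize (Hmi x); destruct (G2 x) as [[]|]; simpl in *; congruence.
      * exfalso; specialize (Hmi x); destruct (G2 x) as [[]|]; simpl in *; congruence.
      * exfalso; specialize (Hmi x); destruct (G2 x) as [[]|]; simpl in *; congruence.
      * rewrite (Ze eq_refl) in *; simpl in *; left; lia.
    + destruct (occ_list R HR _ _ DM (S x) K1) as [la [Oa _]].
      destruct (occ_list R HR _ _ DM 0 I) as [lb [Ob [Lb _]]].
      pose proof (OccList_len _ _ _ _ Hl (OL_app _ _ _ _ _ (OL_lamI _ _ _ Oa) (OL_boxI _ _ _ Oe))) as HL.
      rewrite length_app, !length_map in HL. specialize (Lb I).
      exists (la ++ prodl lb le); split; [apply OL_subst0; auto|left].
      rewrite length_app, prodl_len. nia.
  - destruct (inv_app _ _ _ _ D) as [G1 [G2 [Hs [D1 D2]]]]. apply inv_lamC in D1.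
    destruct (inv_boxC _ _ _ D2) as [G' [Hmc RN]].
    destruct (app_okk _ _ _ x Hs Hx) as [K1 K2].
    pose proof (mc_none _ _ x Hmc K2) as EN.
    pose proof (OccNone_all R HR _ _ _ (HR _ _ RN) EN) as NO.
    destruct (occ_list R HR _ _ D1 (S x) K1) as [la [Oa _]].
    assert (Oe : OccList x (BoxC N) []) by (apply OL_nil; intros p O; inversion O; subst; eapply NO; eauto).
    pose proof (OccList_len _ _ _ _ Hl (OL_app _ _ _ _ _ (OL_lamC _ _ _ Oa) Oe)) as HL.
    rewrite length_app, !length_map in HL.
    exists la; split; [apply OL_subst0_none; auto|left; simpl in HL; lia].
  -
    destruct (inv_app _ _ _ _ D) as [G1 [G2 [Hs [D1 D2]]]].
    destruct (app_okk _ _ _ x Hs Hx) as [K1 K2].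
    destruct (occ_list R HR _ _ D1 x K1) as [l1 [O1 _]].
    destruct (occ_list R HR _ _ D2 x K2) as [l2 [O2 [_ Z2]]].
    pose proof (OccList_len _ _ _ _ Hl (OL_app _ _ _ _ _ O1 O2)) as HL.
    rewrite length_app, !length_map in HL.
    destruct (IHSt eq_refl HR _ D1 x K1 l1 O1) as [l1' [O1' [C|[C1 C2]]]].
    + exists (map (cons dAppL) l1' ++ map (cons dAppR) l2); split; [apply OL_app; auto|left].
      rewrite length_app, !length_map; lia.
    + destruct (app_linish1 _ _ _ x Hs C1) as [LG EN]. rewrite (Z2 EN) in *.
      exists (map (cons dAppL) l1' ++ map (cons dAppR) []); split; [apply OL_app; auto|right; split; auto].
      intros d HD; inversion HD; subst. rewrite length_app, !length_map; simpl.
      match goal with H : Dup 0 M _ |- _ => specialize (C2 _ H) end. lia.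
  -
    destruct (inv_app _ _ _ _ D) as [G1 [G2 [Hs [D1 D2]]]].
    destruct (app_okk _ _ _ x Hs Hx) as [K1 K2].
    destruct (occ_list R HR _ _ D1 x K1) as [l1 [O1 [_ Z1]]].
    destruct (occ_list R HR _ _ D2 x K2) as [l2 [O2 _]].
    pose proof (OccList_len _ _ _ _ Hl (OL_app _ _ _ _ _ O1 O2)) as HL.
    rewrite length_app, !length_map in HL.
    destruct (IHSt eq_refl HR _ D2 x K2 l2 O2) as [l2' [O2' [C|[C1 C2]]]].
    + exists (map (cons dAppL) l1 ++ map (cons dAppR) l2'); split; [apply OL_app; auto|left].
      rewrite length_app, !length_map; lia.
    + destruct (app_linish2 _ _ _ x Hs C1) as [LG EN]. rewrite (Z1 EN) in *.
      exists (map (cons dAppL) [] ++ map (cons dAppR) l2'); split; [apply OL_app; auto|right; split; auto].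
      intros d HD; inversion HD; subst. rewrite length_app, !length_map; simpl.
      match goal with H : Dup 0 N _ |- _ => specialize (C2 _ H) end. lia.
  -
    apply inv_lam in D.
    destruct (occ_list R HR _ _ D (S x) Hx) as [l0 [O0 _]].
    pose proof (OccList_len _ _ _ _ Hl (OL_lam _ _ _ O0)) as HL. rewrite length_map in HL.
    destruct (IHSt eq_refl HR _ D (S x) Hx l0 O0) as [l0' [O0' C]].
    exists (map (cons dAbs) l0'); split; [apply OL_lam; auto|]. rewrite length_map.
    destruct C as [C|[C1 C2]]; [left; lia|right; split; auto].
    intros d HD; inversion HD; subst; eauto.
  -
    destruct (inv_lamI _ _ _ D) as [D'|D'];
    (destruct (occ_list R HR _ _ D' (S x) Hx) as [l0 [O0 _]];
    pose proof (OccList_len _ _ _ _ Hl (OL_lamI _ _ _ O0)) as HL; rewrite length_map in HL;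
    destruct (IHSt eq_refl HR _ D' (S x) Hx l0 O0) as [l0' [O0' C]];
    exists (map (cons dAbs) l0'); split; [apply OL_lamI; auto|]; rewrite length_map;
    destruct C as [C|[C1 C2]]; [left; lia|right; split; auto];
    intros d HD; inversion HD; subst;
    match goal with H : Dup 0 M _ |- _ => specialize (C2 _ H) end; lia).
  -
    apply inv_lamC in D.
    destruct (occ_list R HR _ _ D (S x) Hx) as [l0 [O0 _]].
    pose proof (OccList_len _ _ _ _ Hl (OL_lamC _ _ _ O0)) as HL. rewrite length_map in HL.
    destruct (IHSt eq_refl HR _ D (S x) Hx l0 O0) as [l0' [O0' C]].
    exists (map (cons dAbs) l0'); split; [apply OL_lamC; auto|]. rewrite length_map.
    destruct C as [C|[C1 C2]]; [left; lia|right; split; auto].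
    intros d HD; inversion HD; subst; eauto.
  -
    destruct (inv_boxI _ _ _ D) as [G' [Hmi DM]].
    pose proof (mi_okk _ _ x Hmi Hx) as K.
    destruct (occ_list R HR _ _ DM x K) as [l0 [O0 _]].
    pose proof (OccList_len _ _ _ _ Hl (OL_boxI _ _ _ O0)) as HL. rewrite length_map in HL.
    destruct (IHSt eq_refl HR _ DM x K l0 O0) as [l0' [O0' C]].
    exists (map (cons dBoxI) l0'); split; [apply OL_boxI; auto|]. rewrite length_map.
    destruct C as [C|[C1 C2]]; [left; lia|right; split; [apply (mi_linish _ _ _ Hmi Hx C1)|]].
    intros d HD; inversion HD; subst; eauto.
Qed.

Lemma s0_other k N : forall y, y <> 0 -> Wt k 0 (s0 N y) 1.
Proof. intros [|j] H; [congruence|simpl; constructor]. Qed.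

Lemma ctx_W R n M M' : step0 n M M' -> closed R -> forall G, derI R G M ->
  forall k d w, 1 <= k -> Dup n M d -> d <= k -> Wt k n M w -> exists w', Wt k n M' w' /\ w' < w.
Proof.
  intros St HR; induction St; intros G D k d w Hk HD Hdk HW.
  - inversion HW; subst. match goal with H : Wt k 0 (Lam M) _ |- _ => inversion H; subst end.
    match goal with H1 : Wt k 0 M ?w0, H2 : Wt k 0 N ?a |- _ =>
      destruct (Wt_subst _ _ _ H1 (s0 N) 0 a (s0_other k N) H2) as [c [w' [C [W E]]]] end.
    destruct (inv_app _ _ _ _ D) as [G1 [G2 [Hs [D1 D2]]]]. apply inv_lam in D1.
    pose proof (cnt_spec _ _ _ _ D1 _ _ C) as Sp; simpl in Sp.
    exists w'; split; [exact W|]. nia.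
  - inversion HW; subst. match goal with H : Wt k 0 (LamI M) _ |- _ => inversion H; subst end.
    match goal with H : Wt k 0 (BoxI N) _ |- _ => inversion H; subst end.
    match goal with H1 : Wt k 0 M ?w0, H2 : Wt k 0 N ?a |- _ =>
      destruct (Wt_subst _ _ _ H1 (s0 N) 0 a (s0_other k N) H2) as [c [w' [C [W E]]]] end.
    destruct (inv_app _ _ _ _ D) as [G1 [G2 [Hs [D1 D2]]]].
    assert (Hc : c <= k).
    { destruct (inv_lamI _ _ _ D1) as [DM|DM]; pose proof (cnt_spec _ _ _ _ DM _ _ C) as Sp; simpl in Sp; auto.
      destruct Sp as [l [Nl [Ll Hl]]].
      inversion HD; subst. match goal with H : Dup 0 (LamI M) _ |- _ => inversion H; subst end.
      match goal with H : nfo 0 M _ |- _ => apply nfo_iff in H; destruct H as [l0 [[N0 O0] L0]] end.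
      assert (length l <= length l0) by (apply NoDup_incl_length; auto; intros p Hp; apply O0; auto).
      lia. }
    exists w'; split; [exact W|]. nia.
  - inversion HW; subst. match goal with H : Wt k 0 (LamC M) _ |- _ => inversion H; subst end.
    destruct (inv_app _ _ _ _ D) as [G1 [G2 [Hs [D1 D2]]]]. apply inv_lamC in D1.
    destruct (inv_boxC _ _ _ D2) as [G' [_ RN]].
    destruct (exist_WD R HR 0 _ _ (HR _ _ RN)) as [WN _]. destruct (WN k) as [a Ha].
    match goal with H1 : Wt k 0 M ?w0 |- _ =>
      destruct (Wt_subst _ _ _ H1 (s0 N) 0 a (s0_other k N) Ha) as [c [w' [C [W E]]]] end.
    pose proof (cnt_spec _ _ _ _ D1 _ _ C) as Sp; simpl in Sp.
    exists w'; split; [exact W|]. subst; nia.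
  - destruct (inv_app _ _ _ _ D) as [G1 [G2 [Hs [D1 D2]]]].
    inversion HD; subst; inversion HW; subst;
    (match goal with HDm : Dup _ ?T ?dm, HWm : Wt k _ ?T ?wm, DT : derI R _ ?T |- _ => destruct (IHSt _ DT k dm wm Hk HDm ltac:(lia) HWm) as [w' [W' Lw]] end).
    all: eexists; split; [econstructor; eassumption|lia].
  - destruct (inv_app _ _ _ _ D) as [G1 [G2 [Hs [D1 D2]]]].
    inversion HD; subst; inversion HW; subst;
    (match goal with HDm : Dup _ ?T ?dm, HWm : Wt k _ ?T ?wm, DT : derI R _ ?T |- _ => destruct (IHSt _ DT k dm wm Hk HDm ltac:(lia) HWm) as [w' [W' Lw]] end).
    all: eexists; split; [econstructor; eassumption|lia].
  - apply inv_lam in D.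
    inversion HD; subst; inversion HW; subst;
    (match goal with HDm : Dup _ ?T ?dm, HWm : Wt k _ ?T ?wm, DT : derI R _ ?T |- _ => destruct (IHSt _ DT k dm wm Hk HDm ltac:(lia) HWm) as [w' [W' Lw]] end).
    all: eexists; split; [econstructor; eassumption|lia].
  - destruct (inv_lamI _ _ _ D) as [D'|D'];
    inversion HD; subst; inversion HW; subst;
    (match goal with HDm : Dup _ ?T ?dm, HWm : Wt k _ ?T ?wm, DT : derI R _ ?T |- _ => destruct (IHSt _ DT k dm wm Hk HDm ltac:(lia) HWm) as [w' [W' Lw]] end).
    all: eexists; split; [econstructor; eassumption|lia].
  - apply inv_lamC in D.
    inversion HD; subst; inversion HW; subst;
    (match goal with HDm : Dup _ ?T ?dm, HWm : Wt k _ ?T ?wm, DT : derI R _ ?T |- _ => destruct (IHSt _ DT k dm wm Hk HDm ltac:(lia) HWm) as [w' [W' Lw]] end).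
    all: eexists; split; [econstructor; eassumption|lia].
  - destruct (inv_boxI _ _ _ D) as [G' [_ D']].
    inversion HD; subst; inversion HW; subst;
    (match goal with HDm : Dup _ ?T ?dm, HWm : Wt k _ ?T ?wm, DT : derI R _ ?T |- _ => destruct (IHSt _ DT k dm wm Hk HDm ltac:(lia) HWm) as [w' [W' Lw]] end).
    all: eexists; split; [econstructor; eassumption|nia].
  - destruct (inv_boxC _ _ _ D) as [G' [_ D0']]. pose proof (HR _ _ D0') as D'.
    inversion HD; subst; inversion HW; subst;
    (match goal with HDm : Dup _ ?T ?dm, HWm : Wt k _ ?T ?wm, DT : derI R _ ?T |- _ => destruct (IHSt _ DT k dm wm Hk HDm ltac:(lia) HWm) as [w' [W' Lw]] end).
    all: eexists; split; [econstructor; eassumption|nia].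
Qed.

Lemma ctx_D R n M M' : step0 n M M' -> closed R -> forall G, derI R G M ->
  forall d, Dup n M d -> exists d', Dup n M' d' /\ d' <= d.
Proof.
  intros St HR; induction St; intros G D d HD.
  - inversion HD; subst. match goal with H : Dup 0 (Lam M) _ |- _ => inversion H; subst end.
    pose proof (Dup_pos _ _ _ HD).
    match goal with H1 : Dup 0 M ?dm, H2 : Dup 0 N ?dn |- _ =>
      destruct (Dup_subst _ _ H1 (s0 N) (Nat.max dm dn)) as [d' [? ?]] end.
    + lia.
    + intros [|j] O; simpl; eexists; split; [eassumption|lia|constructor|lia].
    + exists d'; split; auto.
  - inversion HD; subst. match goal with H : Dup 0 (LamI M) _ |- _ => inversion H; subst end.
    match goal with H : Dup 0 (BoxI N) _ |- _ => inversion H; subst end.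
    pose proof (Dup_pos _ _ _ HD).
    match goal with H1 : Dup 0 M ?dm, H2 : Dup 0 N ?dn |- _ =>
      destruct (Dup_subst _ _ H1 (s0 N) (Nat.max (Nat.max c dm) dn)) as [d' [? ?]] end.
    + lia.
    + intros [|j] O; simpl; eexists; split; [eassumption|lia|constructor|lia].
    + exists d'; split; auto.
  - inversion HD; subst. match goal with H : Dup 0 (LamC M) _ |- _ => inversion H; subst end.
    match goal with H : Dup 0 (BoxC N) _ |- _ => inversion H; subst end.
    pose proof (Dup_pos _ _ _ HD).
    destruct (inv_app _ _ _ _ D) as [G1 [G2 [Hs [D1 D2]]]]. apply inv_lamC in D1.
    match goal with H1 : Dup 0 M ?dm |- _ =>
      destruct (Dup_subst _ _ H1 (s0 N) (Nat.max dm 1)) as [d' [? ?]] end.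
    + lia.
    + intros [|j] O; simpl.
      * exfalso. destruct (occ0_typing _ _ _ D1 0 O) as [_ X]; apply X; reflexivity.
      * exists 1; split; [constructor|lia].
    + exists d'; split; auto.
  - destruct (inv_app _ _ _ _ D) as [G1 [G2 [Hs [D1 D2]]]].
    inversion HD; subst;
    (edestruct IHSt as [d' [D' Ld]]; [exact D1|eassumption|]).
    all: eexists; split; [econstructor; eassumption|lia].
  - destruct (inv_app _ _ _ _ D) as [G1 [G2 [Hs [D1 D2]]]].
    inversion HD; subst;
    (edestruct IHSt as [d' [D' Ld]]; [exact D2|eassumption|]).
    all: eexists; split; [econstructor; eassumption|lia].
  - apply inv_lam in D.
    inversion HD; subst;
    (edestruct IHSt as [d' [D' Ld]]; [exact D|eassumption|]).
    all: eexists; split; [econstructor; eassumption|lia].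
  - destruct (inv_lamI _ _ _ D) as [D'|D'];
    inversion HD; subst;
    (edestruct IHSt as [d' [Dd Ld]]; [exact D'|eassumption|]);
    try (eexists; split; [econstructor; eassumption|lia]);
    (match goal with H : nfo 0 M _ |- _ => apply nfo_iff in H; destruct H as [l [Ol Ll]] end;
     destruct (step0_count R _ _ St HR _ D' 0 I l Ol) as [l' [Ol' C]];
     exists (Nat.max (length l') d'); split; [constructor; auto; apply nfo_iff; eauto|];
     destruct C as [C|[_ C]]; [lia|];
     match goal with H : Dup 0 M _ |- _ => specialize (C _ H) end; lia).
  - apply inv_lamC in D.
    inversion HD; subst;
    (edestruct IHSt as [d' [D' Ld]]; [exact D|eassumption|]).
    all: eexists; split; [econstructor; eassumption|lia].
  - destruct (inv_boxI _ _ _ D) as [G' [_ D']].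
    inversion HD; subst;
    (edestruct IHSt as [d' [Dd Ld]]; [exact D'|eassumption|]).
    all: eexists; split; [econstructor; eassumption|lia].
  - destruct (inv_boxC _ _ _ D) as [G' [_ D']].
    inversion HD; subst;
    (edestruct IHSt as [d' [Dd Ld]]; [exact (HR _ _ D')|eassumption|]).
    all: eexists; split; [econstructor; eassumption|lia].
Qed.

Theorem mainTheorem13 (M N : term) (n : nat) :
  is_term M -> step n M N ->
  (forall m, m <= n -> (exists v, calW m M v) /\ (exists v, calW m N v)) /\
  (forall v v', calW n M v -> calW n N v' -> v > v') /\
  (forall m, m < n -> forall v v', calW m M v -> calW m N v' -> v = v').
Proof.
  intros [G [_ [R [RGM HR]]]] [N' [St Bis]].
  assert (HRc : closed R) by exact HR.
  pose proof (HR _ _ RGM) as D.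
  pose proof (bisim_sym _ _ Bis) as Bis'.
  split; [|split].
  - intros m Hm.
    destruct (exist_WD R HRc m G M D) as [WM [d HD]].
    destruct (WM d) as [w HW].
    split; [exists w, d; split; auto|].
    destruct (Nat.eq_dec m n) as [->|Hne].
    + destruct (ctx_D R _ _ _ St HRc G D d HD) as [d' [HD' _]].
      destruct (ctx_W R _ _ _ St HRc G D d d w (Dup_pos _ _ _ HD) HD (le_n _) HW) as [w' [HW' _]].
      destruct (Wt_anyk _ _ _ _ HW' d') as [w'' HW''].
      exists w'', d'; split; [eapply Dup_bisim; eauto|eapply Wt_bisim; eauto].
    + assert (Hlt : m < n) by lia.
      exists w, d; split.
      * eapply Dup_bisim; [|eauto]. apply (proj1 (step_Dup_lt R _ _ _ St HRc G D m Hlt d)); auto.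
      * eapply Wt_bisim; [|eauto]. eapply step_Wt_lt1; eauto.
  - intros v v' [d [HD HW]] [d' [HD' HW']].
    apply (Dup_bisim _ _ _ HD' _) in Bis' as HD''.
    pose proof (Wt_bisim _ _ _ _ HW' _ Bis') as HW''.
    destruct (ctx_D R _ _ _ St HRc G D d HD) as [d2 [HD2 Ld]].
    pose proof (Dup_fun _ _ _ HD'' _ HD2); subst d2.
    destruct (ctx_W R _ _ _ St HRc G D d d v (Dup_pos _ _ _ HD) HD (le_n _) HW) as [w1 [HW1 L1]].
    destruct (Wt_mono _ _ _ _ HW'' d Ld) as [w2 [HW2 L2]].
    pose proof (Wt_fun _ _ _ _ HW1 _ HW2). lia.
  - intros m Hm v v' [d [HD HW]] [d' [HD' HW']].
    apply (Dup_bisim _ _ _ HD' _) in Bis' as HD''.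
    pose proof (Wt_bisim _ _ _ _ HW' _ Bis') as HW''.
    apply (proj2 (step_Dup_lt R _ _ _ St HRc G D m Hm d')) in HD''.
    pose proof (Dup_fun _ _ _ HD _ HD''); subst d'.
    pose proof (step_Wt_lt2 _ _ _ St m Hm _ _ HW'').
    eapply Wt_fun; eauto.
Qed.
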